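(* Let $k,\ell\ge2$ and $c\le 1$. There is a constant $\delta>0$ such that with high probability no set of $t$ vertices of $\hat W_n=\hat W^{k,\ell}_{n,cn}$ with $0<t<\delta n$ (a set of total weight $\ell t$) induces edges of total weight $\ell t$ or more.
   Context: $\hat W_n$: weighted hypergraph with vertex set $\mathbb{Z}_n$, each vertex of weight $\ell$; ordinary edges $e_1,\dots,e_{cn}$, each a multiset of $k$ independent uniformly random elements of $\mathbb{Z}_n$, of weight $1$; helper edges $\{i,i+1\}$ for $i\in\mathbb{Z}_n$ (mod $n$), of weight $\ell-1$. A set $S$ of vertices induces an edge if all vertices of the edge lie in $S$. ''With high probability'' means with probability tending to $1$ as $n\to\infty$. *)

(* Defs.v *)
From HB Require Import structures.
From mathcomp Require Import all_boot all_order all_algebra.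
From mathcomp Require Import reals.
Set Implicit Arguments. Unset Strict Implicit. Unset Printing Implicit Defensive.
Import Order.TTheory GRing.Theory Num.Theory.
Local Open Scope ring_scope.

(* A configuration of the m ordinary edges of \hat W_n: edge i is the
   k-tuple (multiset) of its vertices (E i 0, ..., E i (k-1)) in Z_n = 'I_n.
   The uniform distribution on configurations = each vertex of each edge
   chosen independently and uniformly. *)
Definition edge_config (n m k : nat) := {ffun 'I_m -> {ffun 'I_k -> 'I_n}}.

(* total weight of the edges induced by S:
   ordinary edges (weight 1) entirely inside S, plus helper edges
   {j, j+1 mod n} (weight l-1, indexed by j in Z_n) inside S. *)
Definition induced_weight (n m k l : nat) (E : edge_config n m k)
    (S : {set 'I_n}) : nat :=
  (#|[set i : 'I_m | [forall j : 'I_k, E i j \in S]]|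
   + (l - 1) * #|[set j : 'I_n | (j \in S) && (ordS j \in S)]|)%N.

Definition bad_event (R : realType) (delta : R) (n m k l : nat)
    (E : edge_config n m k) : bool :=
  [exists S : {set 'I_n},
     [&& (0 < #|S|)%N, (#|S|%:R < delta * n%:R) &
         (l * #|S| <= induced_weight l E S)%N]].

Definition prob_good (R : realType) (delta : R) (n m k l : nat) : R :=
  #|[set E : edge_config n m k | ~~ bad_event delta l E]|%:R
  / #|[set: edge_config n m k]|%:R.

(* number of ordinary edges: cn, rounded down (0 if c n < 0) *)
Definition num_edges (R : realType) (c : R) (n : nat) : nat :=
  Num.truncn (c * n%:R).

(* Main.v *)
Require Import Defs.
From HB Require Import structures.
From mathcomp Require Import all_boot all_order all_algebra.
From mathcomp Require Import reals exp sequences.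
From mathcomp Require Import ring lra zify.
From Stdlib Require Import Lia.
Import Order.TTheory GRing.Theory Num.Theory.
Set Implicit Arguments. Unset Strict Implicit. Unset Printing Implicit Defensive.

Fixpoint blists (m : nat) : seq (seq bool) :=
  if m is m'.+1 then [seq false :: s | s <- blists m'] ++ [seq true :: s | s <- blists m']
  else [:: [::]].

Lemma mem_cons_map (c b : bool) s L :
  (b :: s \in [seq c :: x | x <- L]) = (b == c) && (s \in L).
Proof.
apply/mapP/andP => [[x Hx [-> ->]] | [/eqP -> Hs]]; [by split | by exists s].
Qed.

Lemma mem_blists m s : (s \in blists m) = (size s == m).
Proof.
elim: m s => [|m IH] [|b s] //=.
- rewrite mem_cat; apply/negbTE; rewrite negb_or; apply/andP; split;
  by apply/mapP => -[x _].
- rewrite mem_cat !mem_cons_map IH eqSS. by case: (size s == m); case: b.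
Qed.

Lemma uniq_blists m : uniq (blists m).
Proof.
elim: m => [|m IH] //=.
rewrite cat_uniq !map_inj_uniq ?IH //=; try by move=> x y [].
rewrite andbT; apply/hasPn => x /mapP [y _ ->]; by apply/mapP => -[z _].
Qed.

Definition set_of n (s : seq bool) : {set 'I_n} := [set j : 'I_n | nth false s j].

Lemma sum_sets (R : realFieldType) n (F : {set 'I_n} -> R) :
  (\sum_(S : {set 'I_n}) F S = \sum_(s <- blists n) F (set_of n s))%R.
Proof.
rewrite -(big_map (set_of n) xpredT). apply: perm_big. apply: uniq_perm.
- exact: index_enum_uniq.
- rewrite map_inj_in_uniq ?uniq_blists // => s1 s2; rewrite !mem_blists => /eqP h1 /eqP h2 E.
  apply: (@eq_from_nth _ false); first by rewrite h1 h2.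
  move=> i; rewrite h1 => hi. have := congr1 (fun A : {set 'I_n} => Ordinal hi \in A) E. by rewrite /= !inE.
- move=> S; rewrite mem_index_enum; symmetry; apply/mapP.
  exists [seq j \in S | j <- enum 'I_n]; first by rewrite mem_blists size_map size_enum_ord.
  by apply/setP => j; rewrite inE (nth_map j) ?size_enum_ord // nth_ord_enum.
Qed.

Lemma card_set_of n s : size s = n -> #|set_of n s| = count id s.
Proof.
move=> <-. rewrite -sum1_count (big_nth false) big_mkord -sum1_card.
by apply: eq_bigl => j; rewrite inE.
Qed.

Fixpoint ends (prev b0 : bool) (r : seq bool) : nat :=
  if r is b :: r' then (prev && ~~ b) + ends b b0 r' else (prev && ~~ b0).

Lemma endsE prev b0 r : ends prev b0 r =
  \sum_(j < (size r).+1) (nth false (prev :: r) j && ~~ nth false (rcons r b0) j).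
Proof.
elim: r prev => [|b r IH] prev /=; first by rewrite big_ord_recl big_ord0 addn0.
by rewrite big_ord_recl IH.
Qed.

Definition ee n (S : {set 'I_n}) := #|[set j : 'I_n | (j \in S) && (ordS j \notin S)]|.
Definition hh n (S : {set 'I_n}) := #|[set j : 'I_n | (j \in S) && (ordS j \in S)]|.

Lemma hh_ee n (S : {set 'I_n}) : hh S + ee S = #|S|.
Proof.
rewrite -(cardsID [set j | ordS j \in S] S) /hh /ee; congr (_ + _);
apply: eq_card => j; rewrite !inE //; by rewrite andbC.
Qed.

Lemma ee_set_of n b0 r : size r = n -> ee (set_of n.+1 (b0 :: r)) = ends b0 b0 r.
Proof.
move=> <-. rewrite endsE /ee -sum1_card big_mkcond /=.
apply: eq_bigr => j _. rewrite !inE /=.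
have -> : nth false (b0 :: r) (j.+1 %% (size r).+1) = nth false (rcons r b0) j.
  rewrite nth_rcons. have := ltn_ord j; rewrite ltnS leq_eqVlt => /orP [/eqP hj | hj].
  - by rewrite hj modnn ltnn eqxx.
  - by rewrite modn_small ?ltnS // hj.
by case: (nth false (b0 :: r) j); case: (nth false (rcons r b0) j).
Qed.

Local Open Scope ring_scope.

Definition W (R : realFieldType) (x y : R) prev b0 r := x ^+ count id r * y ^+ ends prev b0 r.
Definition U (R : realFieldType) (x y : R) m prev b0 := \sum_(r <- blists m) W x y prev b0 r.

Lemma U0 (R : realFieldType) (x y : R) prev b0 : U x y 0 prev b0 = y ^+ (prev && ~~ b0).
Proof. by rewrite /U /= big_seq1 /W /= expr0 mul1r. Qed.

Lemma US (R : realFieldType) (x y : R) m prev b0 :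
  U x y m.+1 prev b0 = y ^+ prev * U x y m false b0 + x * U x y m true b0.
Proof.
rewrite /U /= big_cat !big_map !mulr_sumr; congr (_ + _); apply: eq_bigr => r _;
rewrite /W /= !exprD; case: prev => /=; rewrite ?expr0 ?expr1; ring.
Qed.

Definition g (R : realFieldType) (y : R) (p b0 : bool) : R :=
  match p, b0 with
  | false, false => 1
  | true, false => 2 * y
  | false, true => (2 * y)^-1
  | true, true => 1
  end.

Lemma U_ge0 (R : realFieldType) (x y : R) m p b0 : 0 <= x -> 0 <= y -> 0 <= U x y m p b0.
Proof.
move=> hx hy; rewrite /U; apply: sumr_ge0 => r _; rewrite /W.
by apply: mulr_ge0; apply: exprn_ge0.
Qed.

Lemma U_le (R : realFieldType) (y : R) m p b0 : 0 < y -> y <= 2^-1 ->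
  U 2^-1 y m p b0 <= (1 + y) ^+ m * g y p b0.
Proof.
move=> y0 y1.
set z := (2 * y)^-1.
have hz : y * z = 2^-1.
  by rewrite /z invfM mulrCA mulfV ?mulr1 // gt_eqF.
have z1 : 1 <= z.
  have z0 : 0 < z by rewrite /z invr_gt0 mulr_gt0.
  nra.
elim: m p b0 => [|m IH] p b0.
  rewrite U0 expr0 mul1r; case: p; case: b0 => /=; rewrite ?expr0 ?expr1 /g -/z; lra.
rewrite US.
have h1 := IH false b0; have h2 := IH true b0.
have e0 : 0 <= y ^+ p by apply: exprn_ge0; lra.
apply: (@le_trans _ _ (y ^+ p * ((1 + y) ^+ m * g y false b0) + 2^-1 * ((1 + y) ^+ m * g y true b0))).
  apply: lerD; [by apply: ler_wpM2l | apply: ler_wpM2l => //; lra].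
have lp : 0 <= (1 + y) ^+ m by apply: exprn_ge0; lra.
have key : y ^+ p * g y false b0 + 2^-1 * g y true b0 <= (1 + y) * g y p b0.
  clear e0 h1 h2; case: p; case: b0; rewrite /g -/z /= ?expr0 ?expr1; nra.
have -> : y ^+ p * ((1 + y) ^+ m * g y false b0) + 2^-1 * ((1 + y) ^+ m * g y true b0)
  = (1 + y) ^+ m * (y ^+ p * g y false b0 + 2^-1 * g y true b0) by ring.
have -> : (1 + y) ^+ m.+1 * g y p b0 = (1 + y) ^+ m * ((1 + y) * g y p b0) by rewrite exprS; ring.
exact: ler_wpM2l.
Qed.

Lemma transfer (R : realFieldType) n (y : R) : 0 < y -> y <= 2^-1 ->
  \sum_(S : {set 'I_n.+1}) (2^-1) ^+ #|S| * y ^+ ee S <= 3/2 * (1 + y) ^+ n.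
Proof.
move=> y0 y1. rewrite sum_sets /= big_cat !big_map.
have E : forall b : bool, \sum_(r <- blists n) (2^-1)^+#|set_of n.+1 (b :: r)| * y^+ ee (set_of n.+1 (b::r))
   = (2^-1)^+b * U 2^-1 y n b b.
  move=> b; rewrite /U mulr_sumr big_seq [RHS]big_seq; apply: eq_bigr => r; rewrite mem_blists => /eqP hr.
  rewrite (@card_set_of n.+1 (b :: r)) /=; last by rewrite hr.
  by rewrite ee_set_of // /W exprD mulrA.
rewrite (E false) (E true) expr0 mul1r expr1.
have h1 := U_le n false false y0 y1; have h2 := U_le n true true y0 y1. rewrite /g in h1 h2.
have H : U 2^-1 y n false false + 2^-1 * U 2^-1 y n true true <= 3/2 * (1 + y) ^+ n by lra.
exact: H.
Qed.

Local Close Scope ring_scope.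

Lemma foldr_prod (T : finType) (f : T -> nat) :
  foldr muln 1 [seq f x | x : T] = \prod_(x : T) f x.
Proof. by rewrite foldrE big_map big_enum. Qed.

Definition inside n m k (E : edge_config n m k) (S : {set 'I_n}) : {set 'I_m} :=
  [set i : 'I_m | [forall j : 'I_k, E i j \in S]].

Lemma card_inside n m k (S : {set 'I_n}) (I : {set 'I_m}) :
  #|[set E : edge_config n m k | I \subset inside E S]| = (#|S| ^ k) ^ #|I| * (n ^ k) ^ (m - #|I|).
Proof.
pose F := fun i : 'I_m => [pred f : {ffun 'I_k -> 'I_n} | (i \in I) ==> [forall j, f j \in S]].
have -> : #|[set E : edge_config n m k | I \subset inside E S]| = #|family F|.
  apply: eq_card => E; rewrite inE; apply/subsetP/familyP => H i.
  - rewrite inE /=; apply/implyP => /H; by rewrite inE.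
  - move=> hi; move: (H i); rewrite inE /= hi /= => h; by rewrite inE.
rewrite card_family foldr_prod (bigID (mem I)) /=.
rewrite (eq_bigr (fun _ => #|S| ^ k)); last first.
  move=> i hi. transitivity #|ffun_on_mem 'I_k (mem S)|; last by rewrite card_ffun_on card_ord.
  apply: eq_card => f.
  rewrite inE /= hi /=. apply/forallP/ffun_onP => H j; exact: H.
rewrite prod_nat_const.
rewrite (eq_bigr (fun _ => n ^ k)); last first.
  move=> i hi. transitivity #|{ffun 'I_k -> 'I_n}|; last by rewrite card_ffun !card_ord.
  apply: eq_card => f.
  by rewrite inE /= (negbTE hi).
rewrite prod_nat_const.
congr (_ * _); congr (_ ^ _).
move: (cardC (mem I)); rewrite card_ord => H.
have Hle : #|I| <= m by rewrite -[X in _ <= X]H leq_addr.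
apply/eqP; rewrite -(eqn_add2l #|I|) subnKC // -[X in _ == X]H.
apply/eqP; congr (_ + _); apply: eq_card => i; by rewrite !inE.
Qed.

Lemma subset_card (T : finType) (A : {set T}) k : (k <= #|A|)%N ->
  exists2 B : {set T}, B \subset A & #|B| = k.
Proof.
move=> hk. exists [set x in take k (enum A)].
  apply/subsetP => x; rewrite inE => /mem_take; by rewrite mem_enum.
rewrite cardsE. have /card_uniqP -> : uniq (take k (enum A)) by rewrite take_uniq ?enum_uniq.
by rewrite size_takel // -cardE.
Qed.

Definition Pset (R : realType) (delta : R) n (S : {set 'I_n}) :=
  (0 < #|S|)%N && (#|S|%:R < delta * n%:R)%R.

Lemma bad_witness (R : realType) (delta : R) n m k l (E : edge_config n m k) :
  (2 <= l)%N -> bad_event delta l E ->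
  exists S, Pset delta S && (#|S| + ee S <= #|inside E S|)%N.
Proof.
move=> hl /existsP [S /and3P [h0 h1 h2]]. exists S. rewrite /Pset h0 h1 /=.
move: h2; rewrite /induced_weight -/(inside E S) => h2.
have H := hh_ee S.
have Hh : hh S <= #|S| by apply: subset_leq_card; apply/subsetP => j; rewrite inE => /andP [].
rewrite /hh in H Hh. move: h2 H Hh.
set h := #|[set j in S | ordS j \in S]|; set t := #|S|; set a := #|inside E S| => h2 H Hh.
have h3 : t - h <= (l - 1) * (t - h) by rewrite leq_pmull // subn_gt0.
have h5 : (l - 1) * t = (l - 1) * h + (l - 1) * (t - h) by rewrite -mulnDr subnKC.
have h4 : l * t = (l - 1) * t + t by rewrite -{1}(subnK (ltnW hl)) mulnDl mul1n.
lia.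
Qed.

Lemma card_bad (R : realType) (delta : R) n m k l : (2 <= l)%N ->
  #|[set E : edge_config n m k | bad_event delta l E]| <=
  \sum_(S : {set 'I_n} | Pset delta S)
     'C(m, #|S| + ee S) * ((#|S| ^ k) ^ (#|S| + ee S) * (n ^ k) ^ (m - (#|S| + ee S))).
Proof.
move=> hl.
apply: (@leq_trans (\sum_(S : {set 'I_n} | Pset delta S) \sum_(I : {set 'I_m} | #|I| == #|S| + ee S)
   #|[set E : edge_config n m k | I \subset inside E S]|)).
- have Hsub : [set E : edge_config n m k | bad_event delta l E] \subset \bigcup_(S : {set 'I_n} | Pset delta S)
     \bigcup_(I : {set 'I_m} | #|I| == #|S| + ee S) [set E : edge_config n m k | I \subset inside E S].
    apply/subsetP => E; rewrite inE => /(bad_witness hl) [S /andP [hS hc]].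
    apply/bigcupP; exists S => //. have [I hI hIc] := subset_card hc.
    apply/bigcupP; exists I; [by rewrite hIc | by rewrite inE].
  apply: leq_trans (subset_leq_card Hsub) _.
  apply: leq_trans (unstable.card_big_setU _ _ _) _. apply: leq_sum => S _.
  exact: unstable.card_big_setU.
- apply: leq_sum => S _.
  rewrite (eq_bigr (fun _ => (#|S| ^ k) ^ (#|S| + ee S) * (n ^ k) ^ (m - (#|S| + ee S)))); last first.
    by move=> I /eqP <-; rewrite card_inside.
  rewrite (eq_bigl (fun I => I \in [set I : {set 'I_m} | #|I| == #|S| + ee S])); last by move=> I; rewrite inE.
  by rewrite sum_nat_const card_draws card_ord.
Qed.

Local Close Scope ring_scope.

Lemma fact_mono t e : (t`! * t ^ e <= (t + e)`!)%N.
Proof.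
elim: e => [|e IH]; first by rewrite expn0 muln1 addn0.
rewrite expnS addnS factS mulnCA; apply: leq_mul => //. by apply: leq_trans (leq_addr e t) _.
Qed.

Lemma ffact_le m a : (m ^_ a <= m ^ a)%N.
Proof.
rewrite ffact_prod.
have H : (\prod_(i < a) (m - i) <= \prod_(i < a) m)%N by apply: leq_prod => i _; apply: leq_subr.
apply: leq_trans H _. by rewrite prod_nat_const card_ord.
Qed.

Local Open Scope ring_scope.

Lemma term_bound (R : realType) n m k t e : (2 <= k)%N -> (0 < t)%N -> (t <= n)%N -> (m <= n)%N ->
  ('C(m, t + e) * ((t ^ k) ^ (t + e) * (n ^ k) ^ (m - (t + e))))%:R / ((n ^ k) ^ m)%:R
  <= ((t%:R ^+ 2 / n%:R) ^+ t / t`!%:R) * (t%:R / n%:R) ^+ e :> R.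
Proof.
move=> hk ht htn hmn.
have n0 : (0 < n)%N by apply: leq_trans htn.
set N : R := n%:R. set T : R := t%:R. set y := T / N.
have N0 : 0 < N by rewrite ltr0n.
have T0 : 0 < T by rewrite ltr0n.
have y0 : 0 <= y by rewrite divr_ge0 // ltW.
have y1 : y <= 1 by rewrite ler_pdivrMr // mul1r ler_nat.
have RHS0 : 0 <= ((T ^+ 2 / N) ^+ t / t`!%:R) * y ^+ e.
  by apply: mulr_ge0; [apply: divr_ge0; [apply: exprn_ge0; apply: divr_ge0 => //; apply: exprn_ge0; apply: ltW|] | apply: exprn_ge0].
set a := (t + e)%N.
case: (leqP a m) => ham; last by rewrite bin_small // mul0n mul0r.
have eqL : ('C(m, a) * ((t ^ k) ^ a * (n ^ k) ^ (m - a)))%:R / ((n ^ k) ^ m)%:R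
    = 'C(m, a)%:R * y ^+ (k * a) :> R.
  have -> : ((n ^ k) ^ m)%:R = ((n ^ k) ^ a)%:R * ((n ^ k) ^ (m - a))%:R :> R.
    by rewrite -natrM -expnD subnKC.
  rewrite !natrM !natrX -/N -/T /y exprM expr_div_n expr_div_n.
  have hNk : N ^+ k != 0 by rewrite expf_neq0 // gt_eqF.
  have hNka : (N ^+ k) ^+ a != 0 by rewrite expf_neq0.
  have hNkma : (N ^+ k) ^+ (m - a) != 0 by rewrite expf_neq0.
  field. by rewrite hNka hNkma.
rewrite eqL.
have hC : 'C(m, a)%:R * a`!%:R <= N ^+ a :> R.
  rewrite -natrM bin_ffact -natrX ler_nat. apply: leq_trans (ffact_le m a) _.
  by rewrite leq_exp2r // addn_gt0 ht.
have hF : t`!%:R * T ^+ e <= a`!%:R :> R.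
  by rewrite -natrX -natrM ler_nat fact_mono.
have hfa : 0 < a`!%:R :> R by rewrite ltr0n fact_gt0.
have hft : 0 < t`!%:R :> R by rewrite ltr0n fact_gt0.
have step1 : 'C(m, a)%:R * y ^+ (k * a) <= 'C(m, a)%:R * y ^+ (2 * a).
  apply: ler_wpM2l; first by rewrite ler0n.
  apply: ler_wiXn2l => //. by rewrite leq_mul2r hk orbT.
apply: le_trans step1 _.
have step2 : 'C(m, a)%:R * y ^+ (2 * a) <= N ^+ a / a`!%:R * y ^+ (2 * a).
  apply: ler_wpM2r; first by apply: exprn_ge0.
  by rewrite ler_pdivlMr.
apply: le_trans step2 _.
have -> : N ^+ a / a`!%:R * y ^+ (2 * a) = (T * y) ^+ a / a`!%:R.
  rewrite exprM /y -/a. have -> : (T * (T / N)) = N * (T / N) ^+ 2.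
    rewrite expr2. field. by rewrite gt_eqF.
  rewrite exprMn [in RHS]exprMn exprAC expr2; ring.
have -> : (T ^+ 2 / N) ^+ t / t`!%:R * y ^+ e = (T * y) ^+ a / (t`!%:R * T ^+ e).
  rewrite /a /y !expr_div_n exprMn [in RHS]exprMn expr_div_n !exprD.
  have h1 : N ^+ t != 0 by rewrite expf_neq0 // gt_eqF.
  have h2 : N ^+ e != 0 by rewrite expf_neq0 // gt_eqF.
  have h3 : T ^+ e != 0 by rewrite expf_neq0 // gt_eqF.
  have h4 : t`!%:R != 0 :> R by rewrite gt_eqF.
  move: h1 h2 h3 h4; set A := N ^+ t; set B := N ^+ e; set C := T ^+ e; set D := T ^+ t; set F := t`!%:R.
  move=> h1 h2 h3 h4. field. by rewrite h1 h2 h3 h4.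
apply: ler_wpM2l; first by apply: exprn_ge0; apply: mulr_ge0 => //; apply: ltW.
rewrite lef_pV2 ?posrE //. by apply: mulr_gt0 => //; apply: exprn_gt0.
Qed.

Local Close Scope ring_scope.

Local Open Scope ring_scope.

Definition qq (R : realType) : R := 2 * expR 1 ^+ 2.

Lemma qq_ge (R : realType) : 8 <= qq R.
Proof.
rewrite /qq. have h := expR_ge1Dx (1 : R).
have h2 : 2 <= expR (1 : R) by lra.
have : 4 <= expR (1 : R) ^+ 2 by rewrite expr2; nra.
lra.
Qed.

Lemma fact_expR (R : realType) t : (0 < t)%N -> (t%:R : R) ^+ t / t`!%:R <= expR 1 ^+ t.
Proof.
case: t => // t _.
have h := @expR_ge1Dxn R t.+1%:R t (ler0n _ _).
rewrite -expRM_natl mulr1. lra.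
Qed.

Lemma t_bound (R : realType) n t (delta : R) :
  0 < delta -> delta <= (4 * qq R)^-1 -> (0 < t)%N -> t%:R < delta * n.+1%:R ->
  ((t%:R ^+ 2 / n.+1%:R) ^+ t / t`!%:R) * \sum_(S : {set 'I_n.+1} | #|S| == t) (t%:R / n.+1%:R) ^+ ee S
   <= 3/2 * (qq R / n.+1%:R) * (2^-1) ^+ t.-1.
Proof.
move=> d0 dq t0 tlt.
set N : R := n.+1%:R. set T : R := t%:R. set y := T / N. set q := qq R. set e := expR (1 : R).
have N0 : 0 < N by rewrite ltr0n.
have T0 : 0 < T by rewrite ltr0n.
have y0 : 0 < y by rewrite divr_gt0.
have q8 : 8 <= q by apply: qq_ge.
have q0 : 0 < q by lra.
have yd : y < delta by rewrite /y ltr_pdivrMr // mulrC.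
have qy : q * y <= 4^-1.
  have : q * y <= q * (4 * q)^-1 by apply: ler_wpM2l; lra.
  have -> : q * (4 * q)^-1 = 4^-1 by field; rewrite gt_eqF.
  done.
have y1 : y <= 2^-1 by nra.
have e1 : 1 <= e by have := expR_ge1Dx (1 : R); rewrite /e; lra.
have Hs : \sum_(S : {set 'I_n.+1} | #|S| == t) y ^+ ee S <= 2 ^+ t * (3/2 * (1 + y) ^+ n).
  apply: le_trans (ler_wpM2l (exprn_ge0 _ (ler0n _ 2)) (transfer n y0 y1)).
  rewrite mulr_sumr [X in X <= _]big_mkcond /=. apply: ler_sum => S _.
  case: ifP => hS; last by apply: mulr_ge0; [|apply: mulr_ge0]; apply: exprn_ge0; lra.
  by rewrite (eqP hS) mulrA -exprMn mulfV ?expr1n ?mul1r // pnatr_eq0.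
have Hy : (1 + y) ^+ n <= e ^+ t.
  have h1 : (1 + y) ^+ n <= expR y ^+ n.
    apply: lerXn2r; rewrite ?nnegrE; [lra | by apply: expR_ge0 | exact: expR_ge1Dx].
  apply: le_trans h1 _.
  have -> : e ^+ t = expR y ^+ n.+1 by rewrite -expRM_natl /y -/N mulrC divfK ?gt_eqF // -expRM_natl mulr1.
  rewrite exprS ler_peMl //; [by apply: exprn_ge0; apply: expR_ge0 | by have := expR_ge1Dx y; lra].
have Hf : T ^+ t / t`!%:R <= e ^+ t by apply: fact_expR.
have Hc : (T ^+ 2 / N) ^+ t / t`!%:R = y ^+ t * (T ^+ t / t`!%:R).
  rewrite /y !expr_div_n exprAC expr2; field. by rewrite !gt_eqF ?exprn_gt0 // ltr0n fact_gt0.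
have Hc0 : 0 <= T ^+ t / t`!%:R by apply: divr_ge0; [apply: exprn_ge0; lra | apply: ler0n].
have step : ((T ^+ 2 / N) ^+ t / t`!%:R) * \sum_(S : {set 'I_n.+1} | #|S| == t) y ^+ ee S
     <= 3/2 * (q * y) ^+ t.
  rewrite Hc.
  apply: le_trans (ler_wpM2l _ Hs) _.
    by apply: mulr_ge0 => //; apply: exprn_ge0; lra.
  have ee0 : 0 <= e ^+ t by apply: exprn_ge0; lra.
  have : y ^+ t * (T ^+ t / t`!%:R) * (2 ^+ t * (3 / 2 * (1 + y) ^+ n))
        <= y ^+ t * e ^+ t * (2 ^+ t * (3 / 2 * e ^+ t)).
    apply: ler_pM.
    - apply: mulr_ge0 => //; apply: exprn_ge0; lra.
    - apply: mulr_ge0; [apply: exprn_ge0; lra | apply: mulr_ge0; [lra | apply: exprn_ge0; lra]].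
    - apply: ler_wpM2l => //; apply: exprn_ge0; lra.
    - apply: ler_wpM2l; [apply: exprn_ge0; lra |]. apply: ler_wpM2l; lra.
  move=> H; apply: le_trans H _.
  have -> : 3/2 * (q*y)^+t = y^+t*e^+t*(2^+t*(3/2*e^+t)).
    rewrite /q /qq -/e !exprMn; ring.
  exact: lexx.
apply: le_trans step _.
clear Hs Hy Hf Hc Hc0.
case: t t0 tlt @T T0 @y y0 yd qy y1 => // t' _ tlt T T0 y y0 yd qy y1 /=.
have qy0 : 0 <= q * y by apply: mulr_ge0; lra.
have h1 : (q * y) ^+ t'.+1 <= q * y * (4^-1) ^+ t'.
  rewrite exprS; apply: ler_wpM2l => //. apply: lerXn2r; rewrite ?nnegrE //; lra.
have h2 : T * (4^-1) ^+ t' <= (2^-1) ^+ t'.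
  have -> : (2^-1 : R) ^+ t' = 2 ^+ t' * (4^-1) ^+ t'.
    by rewrite -exprMn; congr (_ ^+ _); field.
  apply: ler_wpM2r; first by apply: exprn_ge0; lra.
  rewrite /T -natrX ler_nat. exact: ltn_expl.
have : q * y * (4^-1) ^+ t' = q / N * (T * (4^-1) ^+ t') by rewrite /y; ring.
move=> E; rewrite E in h1.
have : (q * y) ^+ t'.+1 <= q / N * (2^-1) ^+ t'.
  apply: le_trans h1 _; apply: ler_wpM2l => //. apply: divr_ge0; lra.
move=> H. have : 3/2 * (q * y) ^+ t'.+1 <= 3/2 * (q / N * (2^-1) ^+ t') by apply: ler_wpM2l => //; lra.
move=> H2; apply: le_trans H2 _. rewrite mulrA. done.
Qed.

Local Close Scope ring_scope.

Local Open Scope ring_scope.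

Lemma sum_by_card (R : realType) n (P : {set 'I_n} -> bool) (G : {set 'I_n} -> R) :
  \sum_(S | P S) G S = \sum_(t < n.+1) \sum_(S | P S && (#|S| == t)) G S.
Proof.
rewrite (partition_big (fun S : {set 'I_n} => inord #|S| : 'I_n.+1) xpredT) //=.
apply: eq_bigr => t _; apply: eq_bigl => S. congr (_ && _).
have hS : (#|S| < n.+1)%N by rewrite ltnS; have := max_card (mem S); rewrite card_ord.
by rewrite -val_eqE /= inordK.
Qed.

Definition G (R : realType) n (S : {set 'I_n}) : R :=
  ((#|S|%:R ^+ 2 / n%:R) ^+ #|S| / #|S|`!%:R) * (#|S|%:R / n%:R) ^+ ee S.

Definition B (R : realType) n (t : nat) : R :=
  if (0 < t)%N then 3/2 * (qq R / n.+1%:R) * (2^-1) ^+ t.-1 else 0.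

Lemma group_bound (R : realType) n (t : nat) :
  \sum_(S : {set 'I_n.+1} | Pset (4 * qq R)^-1 S && (#|S| == t)) G R S <= B R n t.
Proof.
have q8 := qq_ge R.
have d0 : 0 < (4 * qq R)^-1 by rewrite invr_gt0; lra.
have B0 : 0 <= B R n t.
  rewrite /B; case: ifP => _ //; apply: mulr_ge0; [apply: mulr_ge0; [lra | apply: divr_ge0; [lra | apply: ler0n]] | apply: exprn_ge0; lra].
case h : ((0 < t)%N && (t%:R < (4 * qq R)^-1 * n.+1%:R)).
- move/andP: h => [t0 tlt].
  rewrite (eq_bigl (fun S : {set 'I_n.+1} => #|S| == t)); last first.
    move=> S; rewrite /Pset; case: eqP => [-> | _]; by rewrite ?t0 ?tlt ?andbF.
  rewrite (eq_bigr (fun S => ((t%:R ^+ 2 / n.+1%:R) ^+ t / t`!%:R) * (t%:R / n.+1%:R) ^+ ee S)); last first.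
    by move=> S /eqP <-.
  rewrite -mulr_sumr /B t0.
  apply: (@t_bound R n t ((4 * qq R)^-1)) => //.
- rewrite big_pred0 // => S. rewrite /Pset. case: eqP => [hS | _]; last by rewrite andbF.
  by rewrite hS h.
Qed.

Lemma geom (R : realType) m : \sum_(i < m) (2^-1 : R) ^+ i = 2 - 2 * (2^-1) ^+ m.
Proof.
elim: m => [|m IH]; first by rewrite big_ord0 expr0; lra.
rewrite big_ord_recr /= IH exprS. lra.
Qed.

Lemma sumB (R : realType) n : \sum_(t < n.+2) B R n t <= 3 * qq R / n.+1%:R.
Proof.
rewrite big_ord_recl /B /=.
rewrite (eq_bigr (fun i : 'I_n.+1 => 3/2 * (qq R / n.+1%:R) * (2^-1) ^+ i)); last by move=> i _; congr (_ * _ ^+ _).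
rewrite -mulr_sumr geom add0r.
have q8 := qq_ge R.
have N0 : 0 < n.+1%:R :> R by rewrite ltr0n.
have e0 : 0 <= (2^-1 : R) ^+ n.+1 by apply: exprn_ge0; lra.
have qN : 0 <= qq R / n.+1%:R by apply: divr_ge0; lra.
have -> : 3 * qq R / n.+1%:R = 3/2 * (qq R / n.+1%:R) * 2.
  field. rewrite gt_eqF //; have := ler0n R n; lra.
apply: ler_wpM2l; first by apply: mulr_ge0 => //; lra.
lra.
Qed.

Theorem lemma5 (R : realType) (k l : nat) (c : R) :
  (2 <= k)%N -> (2 <= l)%N -> c <= 1 ->
  exists delta : R, 0 < delta /\
    (forall eps : R, 0 < eps -> exists N : nat, forall n : nat, (N <= n)%N ->
       1 - eps <= prob_good delta n (num_edges c n) k l).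
Proof.
move=> hk hl hc.
have q8 := qq_ge R.
exists (4 * qq R)^-1; split; first by rewrite invr_gt0; lra.
move=> eps eps0.
exists (Num.truncn (3 * qq R / eps)).+1 => -[|n] hn //.
set m := num_edges c n.+1.
have N0 : 0 < n.+1%:R :> R by rewrite ltr0n.
have hm : (m <= n.+1)%N.
  rewrite /m /num_edges -[X in (_ <= X)%N](@natrK R n.+1). apply: le_truncn.
  have := ler_wpM2r (ltW N0) hc. by rewrite mul1r.
set delta := (4 * qq R)^-1.
set bad := [set E : edge_config n.+1 m k | bad_event delta l E].
set T := #|[set: edge_config n.+1 m k]|.
have Hcard : #|[set E : edge_config n.+1 m k | ~~ bad_event delta l E]| + #|bad| = T.
  rewrite /T cardsT -(cardsC bad) addnC; congr (_ + _); apply: eq_card => E; by rewrite !inE.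
have HT : T = (((n.+1)^k)^m)%N by rewrite /T cardsT !card_ffun !card_ord.
have T0 : 0 < T%:R :> R by rewrite ltr0n HT !expn_gt0.
have key : (#|bad|%:R / T%:R : R) <= 3 * qq R / n.+1%:R.
  have h1 := @card_bad R delta n.+1 m k l hl.
  apply: le_trans (_ : _ <= (\sum_(S : {set 'I_n.+1} | Pset delta S)
     'C(m, #|S| + ee S) * ((#|S| ^ k) ^ (#|S| + ee S) * (n.+1 ^ k) ^ (m - (#|S| + ee S))))%N%:R / T%:R) _.
    by apply: ler_wpM2r; [rewrite invr_ge0; apply: ltW | rewrite ler_nat].
  rewrite natr_sum mulr_suml.
  apply: le_trans (_ : _ <= \sum_(S : {set 'I_n.+1} | Pset delta S) G R S) _.
    apply: ler_sum => S /andP [hS _]. rewrite HT /G.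
    apply: term_bound => //. by have := max_card (mem S); rewrite card_ord.
  rewrite sum_by_card.
  apply: le_trans (sumB R n). apply: ler_sum => t _. exact: group_bound.
have qe : 3 * qq R / n.+1%:R <= eps.
  have : (Num.truncn (3 * qq R / eps) <= n)%N by [].
  rewrite truncn_le_nat => h.
  move: h; rewrite ltr_pdivrMr // => h. rewrite ler_pdivrMr //. nra.
rewrite /prob_good -/delta -/m -/T.
have -> : #|[set E : edge_config n.+1 m k | ~~ bad_event delta l E]|%:R = T%:R - #|bad|%:R :> R.
  by rewrite -Hcard natrD addrK.
have -> : (T%:R - #|bad|%:R) / T%:R = 1 - #|bad|%:R / T%:R :> R.
  by field; rewrite gt_eqF.
rewrite lerD2l lerN2. exact: le_trans key qe.
Qed.

Local Close Scope ring_scope.
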